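(* Consider the adaptive experiment and the ADL-TMLE $\psi(Q_n^* )$ described in the context. Let $\bar g_\infty\in\mathcal G$ be any fixed treatment randomization function and let $Q_\infty=(Q_{\infty,W},Q_{\infty,Y})\in\mathcal Q$ be any fixed element with $Q_{\infty,W}=Q_{0,W}$ and $Q_{\infty,Y}\in\mathcal Q_Y$ (with outcome conditional mean function $\bar Q_\infty$). Then \[ \psi(Q_n^* )-\psi(Q_0)=M_{1,n}(Q_\infty,\bar g_\infty)+M_{2,n}(Q_n^*,Q_\infty,\bar g_n)+M_{3,n}(Q_\infty,\bar g_n,\bar g_\infty), \] where \[ M_{1,n}(Q_\infty,\bar g_\infty):=\frac1n\sum_{i=1}^n\big[D(Q_\infty,\bar g_\infty)(O_i)-P_{Q_0,g_i}D(Q_\infty,\bar g_\infty)\big], \] \[ M_{2,n}(Q_n^*,Q_\infty,\bar g_n):=\frac1n\sum_{i=1}^n\Big\{\big[D(Q_n^*,\bar g_n)(O_i)-P_{Q_0,g_i}D(Q_n^*,\bar g_n)\big]-\big[D(Q_\infty,\bar g_n)(O_i)-P_{Q_0,g_i}D(Q_\infty,\bar g_n)\big]\Big\}, \] \[ M_{3,n}(Q_\infty,\bar g_n,\bar g_\infty):=\frac1n\sum_{i=1}^n\Big\{\big[D(Q_\infty,\bar g_n)(O_i)-P_{Q_0,g_i}D(Q_\infty,\bar g_n)\big]-\big[D(Q_\infty,\bar g_\infty)(O_i)-P_{Q_0,g_i}D(Q_\infty,\bar g_\infty)\big]\Big\}. \]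
   Context: Setting: $\mathcal W$ is a covariate space, $\mathcal A=\{0,1\}$, $\mathcal Y=[0,1]$. $\mathcal Q_W$ is a set of distributions on $\mathcal W$, $\mathcal Q_Y$ a set of conditional distributions of $Y\in\mathcal Y$ given $(A,W)$, and $\mathcal Q=\mathcal Q_W\otimes\mathcal Q_Y$. For $Q=(Q_W,Q_Y)\in\mathcal Q$, $\bar Q(a,w)$ denotes the conditional mean of $Y$ given $A=a,W=w$ under $Q_Y$, and $\psi(Q):=\int[\bar Q(1,w)-\bar Q(0,w)]\,dQ_W(w)$. $\mathcal G$ is a class of treatment randomization functions $g:\mathcal W\times\mathcal A\to[0,1]$, $g(a|w)$ being the probability of $A=a$ given $W=w$. An adaptive experiment enrolls $n$ units sequentially; unit $i$ has data $O_i=(W_i,A_i,Y_i)$, and $\bar O(i)=(O_1,\dots,O_i)$. With true $Q_0=(Q_{0,W},Q_{0,Y})\in\mathcal Q$: $W_i\sim Q_{0,W}$, then $A_i\sim g_i(\cdot|W_i)$ where $g_i\in\mathcal G$ is a known function determined by $\bar O(i-1)$, then $Y_i\sim Q_{0,Y}(\cdot|A_i,W_i)$; i.e. the joint density is $\prod_{i=1}^n q_{0,w}(w_i)g_i(a_i|w_i)q_{0,y}(y_i|a_i,w_i)$. The average design is $\bar g_n:=\frac1n\sum_{i=1}^n g_i$. For $Q\in\mathcal Q$, $g\in\mathcal G$, $P_{Q,g}$ is the law of $(W,A,Y)$ with $W\sim Q_W$, $A|W\sim g(\cdot|W)$, $Y|A,W\sim Q_Y(\cdot|A,W)$, and $P_{Q,g}f=\int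 f\,dP_{Q,g}$ (any data-dependent quantities inside $f$ being held fixed in the integral). For $Q\in\mathcal Q$, $g\in\mathcal G$, define $D(Q,g)(w,a,y)=D_1(\bar Q,g)(w,a,y)+D_2(Q)(w)$ with $D_1(\bar Q,g)(w,a,y)=\frac{2a-1}{g(a|w)}(y-\bar Q(a,w))$ and $D_2(Q)(w)=\bar Q(1,w)-\bar Q(0,w)-\psi(Q)$. ADL-TMLE: given an initial estimate $\bar Q_n$ of $\bar Q_0$, let $H_n(a,w)=(2a-1)/\bar g_n(a|w)$, $\mathrm{logit}\,\bar Q_{n,\epsilon}=\mathrm{logit}\,\bar Q_n+\epsilon H_n$, and $\bar Q_n^*=\bar Q_{n,\epsilon_n}$ with $\epsilon_n$ such that $\frac1n\sum_{i=1}^n\frac{2A_i-1}{\bar g_n(A_i|W_i)}[Y_i-\bar Q_n^*(A_i,W_i)]=0$. Then $Q_n^*=(Q_{n,W},Q_{n,Y}^* )$ where $Q_{n,W}$ is the empirical distribution of $W_1,\dots,W_n$ and $Q^*_{n,Y}$ is an outcome distribution with conditional mean $\bar Q_n^*$, so $\psi(Q_n^* )=\frac1n\sum_{i=1}^n[\bar Q_n^*(1,W_i)-\bar Q_n^*(0,W_i)]$. *)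

(* Defs.v *)
From HB Require Import structures.
From mathcomp Require Import all_boot all_order all_algebra.
From mathcomp Require Import all_classical all_reals all_analysis.
Set Implicit Arguments. Unset Strict Implicit. Unset Printing Implicit Defensive.
Import Order.TTheory GRing.Theory Num.Theory.
Import numFieldNormedType.Exports.
Local Open Scope classical_set_scope.
Local Open Scope ring_scope.

Section ADLTMLE.
Context {R : realType} {d : measure_display} {W : measurableType d}.

(* Treatment A in {0,1} is encoded as bool (true = 1). *)
Definition sgnA (a : bool) : R := if a then 1 else -1.

(* an element of the design class G: g a w = g(a|w) *)
Definition is_design (delta : R) (g : bool -> W -> R) : Prop :=
  (forall a, measurable_fun setT (g a)) /\
  (forall a w, delta <= g a w) /\
  (forall w, g true w + g false w = 1).

Definition Qbar_of (QY : bool -> W -> probability R R) (a : bool) (w : W) : R :=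
  Rintegral (QY a w) setT (fun y => y).

Definition psi_of (QW : probability W R) (Qb : bool -> W -> R) : R :=
  Rintegral QW setT (fun w => Qb true w - Qb false w).

(* D(Q,g) where Q enters through Qbar and psi(Q) *)
Definition D1 (Qb : bool -> W -> R) (g : bool -> W -> R) (w : W) (a : bool) (y : R) : R :=
  sgnA a / g a w * (y - Qb a w).
Definition D2 (Qb : bool -> W -> R) (psiQ : R) (w : W) : R :=
  Qb true w - Qb false w - psiQ.
Definition Dfun (Qb : bool -> W -> R) (psiQ : R) (g : bool -> W -> R)
  (w : W) (a : bool) (y : R) : R := D1 Qb g w a y + D2 Qb psiQ w.

Definition Pexp (QW : probability W R) (QY : bool -> W -> probability R R)
  (g : bool -> W -> R) (f : W -> bool -> R -> R) : R :=
  Rintegral QW setT (fun w =>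
    g true w * Rintegral (QY true w) setT (f w true)
  + g false w * Rintegral (QY false w) setT (f w false)).

Definition gbar (n : nat) (gs : nat -> bool -> W -> R) (a : bool) (w : W) : R :=
  n%:R^-1 * \sum_(i < n) gs i a w.

Definition expit (x : R) : R := 1 / (1 + expR (- x)).
Definition logit (p : R) : R := ln (p / (1 - p)).

Definition Qbar_eps (Qn : bool -> W -> R) (gb : bool -> W -> R) (eps : R)
  (a : bool) (w : W) : R :=
  expit (logit (Qn a w) + eps * (sgnA a / gb a w)).

(* psi(Q) with Q_W the empirical distribution of W_1..W_n *)
Definition psi_emp (n : nat) (Wd : nat -> W) (Qb : bool -> W -> R) : R :=
  n%:R^-1 * \sum_(i < n) (Qb true (Wd i) - Qb false (Wd i)).

End ADLTMLE.

(* Main.v *)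
Require Import Defs.
From HB Require Import structures.
From mathcomp Require Import all_boot all_order all_algebra.
From mathcomp Require Import all_classical all_reals all_analysis.
Import Order.TTheory GRing.Theory Num.Theory.
Import numFieldNormedType.Exports.
Local Open Scope classical_set_scope.
Local Open Scope ring_scope.
From mathcomp Require Import measurable_realfun.
From mathcomp Require Import ring lra.

Section H.
Context {R : realType} {d : measure_display} {W : measurableType d}.

Definition mb (f : W -> R) :=
  measurable_fun setT f /\ exists K : R, forall w, `|f w| <= K.

Lemma mb_int (P : probability W R) f : mb f -> P.-integrable setT (EFin \o f).
Proof.
case=> mf [K hK]; apply: measurable_bounded_integrable => //.
  exact: (le_lt_trans (probability_le1 P measurableT) (ltry 1)).
exists K; split; first by rewrite num_real.
by move=> M KM x _; apply: le_trans (hK x) (ltW KM).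
Qed.

Lemma mbC c : mb (fun _ => c).
Proof. by split; [exact: measurable_cst | exists `|c|]. Qed.

Lemma mbD f g : mb f -> mb g -> mb (fun w => f w + g w).
Proof.
case=> mf [K1 h1] [mg [K2 h2]]; split; first exact: measurable_funD.
by exists (K1 + K2) => w; apply: le_trans (ler_normD _ _) (lerD (h1 w) (h2 w)).
Qed.

Lemma mbN f : mb f -> mb (fun w => - f w).
Proof.
case=> mf [K1 h1]; split; first exact: measurable_funN.
by exists K1 => w; rewrite normrN.
Qed.

Lemma mbB f g : mb f -> mb g -> mb (fun w => f w - g w).
Proof. by move=> hf hg; apply: mbD => //; exact: mbN. Qed.

Lemma mbM f g : mb f -> mb g -> mb (fun w => f w * g w).
Proof.
case=> mf [K1 h1] [mg [K2 h2]]; split; first exact: measurable_funM.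
exists (K1 * K2) => w; rewrite normrM; apply: ler_pM => //.
Qed.

Lemma measV_pos (f : W -> R) : (forall w, 0 < f w) -> measurable_fun setT f ->
  measurable_fun setT (fun w => (f w)^-1).
Proof.
move=> fp mf.
have -> : (fun w => (f w)^-1) = (fun w => expR (- ln (f w))).
  by apply/funext => w; rewrite expRN lnK // posrE.
apply: measurableT_comp => //; apply: measurableT_comp => //.
exact: measurableT_comp.
Qed.

Lemma mbV (f : W -> R) (c : R) : 0 < c -> (forall w, c <= f w) -> measurable_fun setT f ->
  mb (fun w => (f w)^-1).
Proof.
move=> c0 cf mf; have fp w : 0 < f w by apply: lt_le_trans (cf w).
split; first exact: measV_pos.
exists c^-1 => w; rewrite ger0_norm; last by rewrite invr_ge0 ltW.
by rewrite lef_pV2 ?posrE.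
Qed.

End H.

Section P.
Context {R : realType}.

Definition clamp (y : R) := Num.max 0 (Num.min y 1).

Lemma clampE (y : R) : 0 <= y <= 1 -> clamp y = y.
Proof.
case/andP=> h0 h1; rewrite /clamp.
by rewrite (min_l h1) (max_r h0).
Qed.

Lemma clamp01 (y : R) : 0 <= clamp y <= 1.
Proof.
rewrite /clamp; apply/andP; split; first by rewrite le_max lexx.
by rewrite ge_max ler01 ge_min lexx orbT.
Qed.

Lemma mclamp : measurable_fun setT clamp.
Proof.
apply: measurable_maxr; first exact: measurable_cst.
apply: measurable_minr; [exact: measurable_id | exact: measurable_cst].
Qed.

Lemma S01 : [set y : R | 0 <= y <= 1] = `[0, 1]%classic.
Proof. by apply/seteqP; split => y /=; rewrite in_itv. Qed.

Variable P : probability R R.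
Hypothesis PS : P [set y : R | 0 <= y <= 1] = 1%E.
Let PT : P setT = 1%E. Proof. exact: probability_setT. Qed.

Lemma ae_clamp (U : Type) (h : R -> U) :
  (fun y => h y) = (fun y => h (clamp y)) %[ae P in setT].
Proof.
exists (~` [set y : R | 0 <= y <= 1]); split.
- by apply: measurableC; rewrite S01; exact: measurable_itv.
- by rewrite probability_setC ?PS ?subee // S01; exact: measurable_itv.
- move=> y /= hy hS; apply: hy => _.
  by rewrite clampE.
Qed.

Lemma int_id : P.-integrable setT (EFin \o (fun y : R => y)).
Proof.
apply/integrableP; split; first by apply/measurable_EFinP; exact: measurable_id.
rewrite (@ae_eq_integral _ _ _ P setT (fun y => `|(clamp y)%:E|)%E) //.
- apply: le_lt_trans (@integral_le_bound _ _ _ P setT (fun y => (clamp y)%:E) 1%E _ _ _ _) _ => //.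
  + apply/measurable_EFinP; exact: mclamp.
  + by apply: aeW => y _; rewrite /= lee_fin ger0_norm; case/andP: (clamp01 y).
  + by rewrite mul1e; exact: (le_lt_trans (probability_le1 P measurableT) (ltry 1)).
- apply: measurableT_comp => //; apply/measurable_EFinP; exact: measurable_id.
- apply: measurableT_comp => //; apply/measurable_EFinP; exact: mclamp.
- by have := ae_clamp _ (fun y => `|y%:E|%E); rewrite /ae_eq.
Qed.

Lemma Qbar01 : 0 <= Rintegral P setT (fun y => y) <= 1.
Proof.
have -> : Rintegral P setT (fun y => y) = Rintegral P setT clamp.
  congr fine; apply: ae_eq_integral => //.
  - apply/measurable_EFinP; exact: mclamp.
  - by have := ae_clamp _ (fun y => y%:E); rewrite /ae_eq.
have ic : P.-integrable setT (EFin \o clamp).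
  apply: measurable_bounded_integrable => //; first exact: (le_lt_trans (probability_le1 P measurableT) (ltry 1)).
    exact: mclamp.
  exists 1; split; first by rewrite num_real.
  move=> M KM x _ /=; apply: le_trans (ltW KM).
  by rewrite ger0_norm; case/andP: (clamp01 x).
apply/andP; split.
  by apply: Rintegral_ge0 => y _; case/andP: (clamp01 y).
apply: le_trans (le_Rintegral (f2 := fun _ => 1) _ ic _ _) _ => //.
- exact: finite_measure_integrable_cst.
- by move=> y _; case/andP: (clamp01 y).
- rewrite Rintegral_cst // [fine _](_ : _ = 1) ?mul1r //.
  by transitivity (fine (1%E : \bar R)) => //; congr fine; exact: probability_setT.
Qed.

Lemma Rint_aff c1 q c2 :
  Rintegral P setT (fun y => c1 * (y - q) + c2) =
  c1 * (Rintegral P setT (fun y => y) - q) + c2.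
Proof.
have -> : (fun y => c1 * (y - q) + c2) = (fun y => c1 * y + (c2 - c1 * q)).
  by apply/funext => y; ring.
have iZ : P.-integrable setT (EFin \o (fun y => c1 * y)).
  have -> : EFin \o (fun y => c1 * y) = (fun y => c1%:E * (EFin \o (fun y => y)) y)%E.
    by apply/funext => y /=; rewrite EFinM.
  exact: integrableZl int_id.
rewrite RintegralD //; last exact: finite_measure_integrable_cst.
rewrite RintegralZl //; last exact: int_id.
rewrite Rintegral_cst // [fine _](_ : _ = 1).
  by ring.
by transitivity (fine (1%E : \bar R)) => //; congr fine; exact: probability_setT.
Qed.

End P.

Section S2.
Context {R : realType} {d : measure_display} {W : measurableType d}.

Lemma mb_sum (I : Type) (s : seq I) (F : I -> W -> R) :
  (forall i, mb (F i)) -> mb (fun w => \sum_(i <- s) F i w).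
Proof.
move=> hF; elim: s => [|i s IH].
  by under eq_fun do rewrite big_nil; exact: mbC.
by under eq_fun do rewrite big_cons; apply: mbD.
Qed.

Lemma Rint_sum (P : probability W R) (I : Type) (s : seq I) (F : I -> W -> R) :
  (forall i, mb (F i)) ->
  Rintegral P setT (fun w => \sum_(i <- s) F i w) =
  \sum_(i <- s) Rintegral P setT (F i).
Proof.
move=> hF; elim: s => [|i s IH].
  under eq_Rintegral do rewrite big_nil.
  by rewrite Rintegral_cst // mul0r big_nil.
under eq_Rintegral do rewrite big_cons.
rewrite RintegralD //; first by rewrite IH big_cons.
  exact: mb_int.
by apply: mb_int; apply: mb_sum.
Qed.

Lemma fineP1 (P : probability W R) : fine (P setT) = 1.
Proof. by transitivity (fine (1%E : \bar R)) => //; congr fine; exact: probability_setT. Qed.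

End S2.
Theorem theorem2 (R : realType) (d : measure_display) (W : measurableType d)
  (delta : R)
  (Q0W : probability W R) (Q0Y : bool -> W -> probability R R)
  (QinfY : bool -> W -> probability R R)
  (ginf : bool -> W -> R)
  (n : nat) (gs : nat -> bool -> W -> R)
  (Wd : nat -> W) (Ad : nat -> bool) (Yd : nat -> R)
  (Qn : bool -> W -> R) (eps : R) :
  0 < delta ->
  (0 < n)%N ->
  (* outcomes take values in [0,1] *)
  (forall a w, Q0Y a w [set y : R | 0 <= y <= 1] = 1%E) ->
  (forall a w, QinfY a w [set y : R | 0 <= y <= 1] = 1%E) ->
  (forall a, measurable_fun setT (Qbar_of Q0Y a)) ->
  (forall a, measurable_fun setT (Qbar_of QinfY a)) ->
  (forall i, (i < n)%N -> 0 <= Yd i <= 1) ->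
  (* designs g_i and the fixed design gbar_infinity belong to G *)
  (forall i, (i < n)%N -> is_design delta (gs i)) ->
  is_design delta ginf ->
  (* initial estimate Qbar_n *)
  (forall a, measurable_fun setT (Qn a)) ->
  (forall a w, 0 < Qn a w < 1) ->
  (* TMLE score equation defining eps_n *)
  n%:R^-1 * \sum_(i < n)
      (sgnA (Ad i) / gbar n gs (Ad i) (Wd i)
        * (Yd i - Qbar_eps Qn (gbar n gs) eps (Ad i) (Wd i))) = 0 ->
  let gbn := gbar n gs in
  let Qstar := Qbar_eps Qn gbn eps in
  let psiStar := psi_emp n Wd Qstar in
  let Qinf := Qbar_of QinfY in
  let psiInf := psi_of Q0W Qinf in
  let psi0 := psi_of Q0W (Qbar_of Q0Y) in
  let cen (i : nat) (f : W -> bool -> R -> R) :=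
      f (Wd i) (Ad i) (Yd i) - Pexp Q0W Q0Y (gs i) f in
  let M1 := n%:R^-1 * \sum_(i < n) cen i (Dfun Qinf psiInf ginf) in
  let M2 := n%:R^-1 * \sum_(i < n)
      (cen i (Dfun Qstar psiStar gbn) - cen i (Dfun Qinf psiInf gbn)) in
  let M3 := n%:R^-1 * \sum_(i < n)
      (cen i (Dfun Qinf psiInf gbn) - cen i (Dfun Qinf psiInf ginf)) in
  psiStar - psi0 = M1 + M2 + M3.
Proof.
move=> d0 n0 H0Y HinfY mQ0 mQinf hY hgs hginf mQn hQn score.
move=> gbn Qstar psiStar Qinf psiInf psi0 cen M1 M2 M3.
have -> : M1 + M2 + M3 = n%:R^-1 * \sum_(i < n) cen i (Dfun Qstar psiStar gbn).
  rewrite /M1 /M2 /M3 -!mulrDr; congr (_ * _); rewrite -!big_split /=.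
  by apply: eq_bigr => i _; ring.
have nR : n%:R != 0 :> R by rewrite pnatr_eq0 -lt0n.
have gsb i : (i < n)%N -> forall a w, delta <= gs i a w /\ gs i a w <= 1.
  move=> lin a w; case: (hgs i lin) => _ [hd h1]; split => //.
  have := h1 w; have := hd true w; have := hd false w.
  by case: a; lra.
have gbge a w : delta <= gbn a w.
  have : \sum_(i < n) delta <= \sum_(i < n) gs i a w.
    by apply: ler_sum => i _; case: (gsb i (ltn_ord i) a w).
  rewrite sumr_const card_ord -mulr_natl => h.
  apply: le_trans (_ : delta <= n%:R^-1 * (n%:R * delta)) _; first by rewrite mulKf.
  by rewrite /gbn /gbar; apply: ler_wpM2l => //; rewrite invr_ge0 ler0n.
have gbsum w : gbn true w + gbn false w = 1.
  rewrite /gbn /gbar -mulrDr -big_split /= (eq_bigr (fun=> 1)).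
    by rewrite sumr_const card_ord mulVf.
  by move=> i _; case: (hgs i (ltn_ord i)) => _ [_ ->].
have gbne a w : gbn a w != 0.
  by apply: negbT; apply: gt_eqF; apply: lt_le_trans (gbge a w).
have Sg a w : \sum_(i < n) gs i a w = n%:R * gbn a w.
  by rewrite /gbn /gbar mulrA divff // mul1r.
have mgb a : measurable_fun setT (gbn a).
  rewrite /gbn /gbar; apply: measurable_funM; first exact: measurable_cst.
  apply: measurable_sum => i; by case: (hgs i (ltn_ord i)).
have mbgbV a : mb (fun w => (gbn a w)^-1) := @mbV _ _ _ (gbn a) delta d0 (gbge a) (mgb a).
have mbgs i a : (i < n)%N -> mb (gs i a).
  move=> lin; split; first by case: (hgs i lin).
  exists 1 => w; case: (gsb i lin a w) => h1 h2.
  by rewrite ger0_norm //; apply: le_trans h1; apply: ltW.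
have mbQ0 a : mb (Qbar_of Q0Y a).
  split => //; exists 1 => w; have /andP[h1 h2] := @Qbar01 R (Q0Y a w) (H0Y a w).
  by rewrite ger0_norm.
have mbQs a : mb (Qstar a).
  rewrite /Qstar /Qbar_eps /expit /logit.
  apply: (@mbM _ _ _ (fun _ => 1)); first exact: mbC.
  apply: (@mbV _ _ _ _ 1) => //.
    by move=> w; rewrite lerDl expR_ge0.
  apply: measurable_funD; first exact: measurable_cst.
  apply: measurableT_comp => //; apply: measurable_funN.
  apply: measurable_funD.
    apply: measurableT_comp => //; apply: measurable_funM => //.
    apply: (@measV_pos _ _ _ (fun w => 1 - Qn a w)).
      by move=> w; case/andP: (hQn a w) => _ h; rewrite subr_gt0.
    by apply: measurable_funB => //; exact: measurable_cst.
  apply: measurable_funM; first exact: measurable_cst.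
  apply: measurable_funM; first exact: measurable_cst.
  by case: (mbgbV a).
pose F (i : 'I_n) (w : W) :=
  gs i true w * (sgnA true / gbn true w * (Qbar_of Q0Y true w - Qstar true w)
     + (Qstar true w - Qstar false w - psiStar))
  + gs i false w * (sgnA false / gbn false w * (Qbar_of Q0Y false w - Qstar false w)
     + (Qstar true w - Qstar false w - psiStar)).
have mbF i : mb (F i).
  have li := ltn_ord i.
  rewrite /F; apply: mbD; apply: mbM; try exact: mbgs;
    (apply: mbD; [apply: mbM; [apply: mbM; [exact: mbC | exact: mbgbV] | apply: mbB] |
      apply: mbB; [apply: mbB | exact: mbC]]) => //.
have PexpE (i : 'I_n) : Pexp Q0W Q0Y (gs i) (Dfun Qstar psiStar gbn) =
    Rintegral Q0W setT (F i).
  rewrite /Pexp; apply: eq_Rintegral => w _.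
  rewrite /Dfun /D1 /D2 /=.
  by rewrite (Rint_aff _ (H0Y true w)) (Rint_aff _ (H0Y false w)).
have scoreS : \sum_(i < n) (sgnA (Ad i) / gbar n gs (Ad i) (Wd i)
        * (Yd i - Qbar_eps Qn (gbar n gs) eps (Ad i) (Wd i))) = 0.
  by move: score => /eqP; rewrite mulf_eq0 invr_eq0 (negbTE nR) /= => /eqP.
have sumD : \sum_(i < n) Dfun Qstar psiStar gbn (Wd i) (Ad i) (Yd i) = 0.
  rewrite /Dfun big_split /=.
  rewrite (_ : \sum_(i < n) D1 Qstar gbn (Wd i) (Ad i) (Yd i) = 0) ?add0r;
    last exact: scoreS.
  rewrite /D2 sumrB sumr_const card_ord /psiStar /psi_emp.
  by field; rewrite nR.
have sumF w : \sum_(i < n) F i w = n%:R * (Qbar_of Q0Y true w - Qbar_of Q0Y false w - psiStar).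
  rewrite /F big_split /= -!mulr_suml !Sg.
  have g0 : gbn false w = 1 - gbn true w by rewrite -(gbsum w) addrC addKr.
  have h1 := gbne true w; have h0 := gbne false w.
  rewrite g0 in h0 *; rewrite /=.
  by field; rewrite h0 h1.
have Pint : Rintegral Q0W setT (fun w => \sum_(i < n) F i w) = n%:R * (psi0 - psiStar).
  rewrite (@eq_Rintegral _ _ _ Q0W setT (fun w => n%:R * (Qbar_of Q0Y true w - Qbar_of Q0Y false w - psiStar))); last by move=> w _; rewrite sumF.
  rewrite RintegralZl //; last by apply: mb_int; apply: mbB; [apply: mbB | exact: mbC].
  rewrite RintegralB //; last exact: finite_measure_integrable_cst.
    by rewrite Rintegral_cst // fineP1 mulr1.
  by apply: mb_int; apply: mbB.
rewrite /cen sumrB sumD add0r.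
rewrite (eq_bigr (fun i => Rintegral Q0W setT (F i))); last by move=> i _; exact: PexpE.
rewrite -Rint_sum // Pint.
by rewrite mulrN mulrA mulVf // mul1r opprB.
Qed.
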